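(* Let $k>l>0$ be coprime integers and $\lambda=\lambda_{k,l}$. Then the horizontal maximal cylinders of $X_\lambda$ form a cylinder decomposition, and the Veech group of $X_\lambda$ contains the parabolic element $$\begin{pmatrix}1&k(1+\lambda)\\0&1\end{pmatrix}.$$ It is the derivative of an affine homeomorphism that acts as the $k$-th power of a Dehn twist on the bottom horizontal cylinder (height $1$, circumference $1+\lambda$), and as the $l$-th power of a Dehn twist on each other horizontal cylinder (height $\lambda^{n}$, circumference $\lambda^{n-1}+\lambda^n+\lambda^{n+1}$, for $n\ge1$).
   Context: Notation: for $\lambda>0$ put $s_{-1}=0$ and $s_n=\sum_{i=0}^{n}\lambda^i$ for $n\ge 0$. Let $L_\lambda$ be the infinite polygonal path with consecutive vertices $(0,0),(s_0,0)$ and then, for $n\ge1$, the two vertices $(s_n,s_{n-2})$ and $(s_n,s_{n-1})$. Let $U_\lambda$ be its reflection in the line $y=x$. The \emph{ladder surface} $X_\lambda$ is the translation surface obtained from the open region bounded by $L_\lambda$ and $U_\lambda$ by identifying, via translation, each edge of $L_\lambda$ with the edge of $U_\lambda$ that is parallel to it and of the same length. Vertices are not points of $X_\lambda$. For coprime integers $k>l>0$, $\lambda_{k,l}$ denotes the positive solution of $k(\lambda+1)=l(\lambda^{-1}+1+\lambda)$. A cylinder of circumference $w$ and height $h$ is an open subset isometric to $\mathbb{R}/w\mathbb{Z}\times(0,h)$. A cylinder decomposition is a family of pairwise disjoint maximal cylinders whose closures cover the surface. An affine homeomorphism is one that is locally of the form $z\mapsto Az+t$ in translation charts; the matrix $A$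 is its derivative. The Veech group is the image in $\mathrm{PSL}(2,\mathbb{R})$ of the derivatives of orientation-preserving affine homeomorphisms of $X_\lambda$. *)

(* Defs.v *)
From HB Require Import structures.
From mathcomp Require Import all_boot all_order all_algebra.
From mathcomp Require Import reals.
Set Implicit Arguments. Unset Strict Implicit. Unset Printing Implicit Defensive.
Import Order.TTheory GRing.Theory Num.Theory.
Local Open Scope ring_scope.

(* Indexing convention: ss m = \sum_(i<m) lam^i, i.e. ss m = s_(m-1) in the
   paper's notation (so ss 0 = s_(-1) = 0, ss 1 = s_0 = 1, ...).
   Note m.-1 is truncated predecessor, so ss (0.-1) = ss 0 = 0. *)

Section Ladder.
Variable R : realType.
Variable lam : R.

Definition ss (m : nat) : R := \sum_(i < m) lam ^+ i.

(* The open region bounded by L_lam and U_lam:  y > g(x) and x > g(y), where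
   g(t) = ss (m-1) for ss m <= t < ss (m+1). *)
Definition in_region (p : R * R) : Prop :=
  exists m n : nat,
    [/\ ss m <= p.1 < ss m.+1, ss m.-1 < p.2,
        ss n <= p.2 < ss n.+1 & ss n.-1 < p.1].

Definition onLH (m : nat) (p : R * R) : Prop :=
  ss m < p.1 < ss m.+1 /\ p.2 = ss m.-1.
Definition onLV (n : nat) (p : R * R) : Prop :=
  (0 < n)%N /\ p.1 = ss n.+1 /\ ss n.-1 < p.2 < ss n.
Definition onUH (n : nat) (p : R * R) : Prop := onLV n (p.2, p.1).
Definition onUV (m : nat) (p : R * R) : Prop := onLH m (p.2, p.1).

(* Gluing by translation: L-horizontal edge m (length lam^m) is glued to the
   U-horizontal edge m+1 (length lam^m); L-vertical edge n (length lam^(n-1))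
   is glued to the U-vertical edge n-1 (length lam^(n-1)). *)
Definition glueLU (a b : R * R) : Prop :=
  (exists m, onLH m a /\ b = (a.1, a.2 + (ss m.+2 - ss m.-1))) \/
  (exists n, onLV n a /\ b = (a.1 - (ss n.+1 - ss n.-2), a.2)).

Definition onL (p : R * R) := (exists m, onLH m p) \/ (exists n, onLV n p).
Definition onU (p : R * R) := (exists n, onUH n p) \/ (exists m, onUV m p).
Definition inPoly (p : R * R) := [\/ in_region p, onL p | onU p].

(* Points of X_lam: we represent each point by a unique representative:
   region points and points of open L-edges (a point of an open U-edge is
   represented by its partner on L). *)
Definition inX (p : R * R) : Prop := in_region p \/ onL p.
Definition X := {p : R * R | inX p}.

Definition Rep (x : X) (p : R * R) : Prop := p = sval x \/ glueLU (sval x) p.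

Definition addv (p v : R * R) : R * R := (p.1 + v.1, p.2 + v.2).
Definition scalev (t : R) (v : R * R) : R * R := (t * v.1, t * v.2).

(* Dev x v y : y is reached from x by a straight segment with holonomy v
   drawn inside the polygon (from one representative of x).  For |v| small,
   v |-> y is the translation chart of X_lam at x. *)
Definition Dev (x : X) (v : R * R) (y : X) : Prop :=
  exists p, [/\ Rep x p, Rep y (addv p v) &
    forall t, 0 <= t <= 1 -> inPoly (addv p (scalev t v))].

Definition ball0 (e : R) (v : R * R) : Prop := v.1 ^+ 2 + v.2 ^+ 2 < e ^+ 2.

Definition mapply (A : 'M[R]_2) (v : R * R) : R * R :=
  (A 0 0 * v.1 + A 0 1 * v.2, A 1 0 * v.1 + A 1 1 * v.2).

Definition locally_affine (f : X -> X) (A : 'M[R]_2) : Prop :=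
  forall x, exists2 e, 0 < e &
    forall v y, ball0 e v -> Dev x v y -> Dev (f x) (mapply A v) (f y).

(* affine homeomorphism with derivative A (a bijective locally affine map is
   automatically a homeomorphism for the flat topology) *)
Definition affine_homeo (f : X -> X) (A : 'M[R]_2) : Prop :=
  bijective f /\ locally_affine f A.

(* M lies in the Veech group: its class in PSL(2,R) is the image of the
   derivative of an orientation-preserving affine homeomorphism. *)
Definition in_Veech (M : 'M[R]_2) : Prop :=
  exists (f : X -> X) (A : 'M[R]_2),
    [/\ affine_homeo f A, 0 < \det A & (A = M \/ A = - M)].

(* phi : R x (0,h) -> X is a horizontal cylinder chart of circumference w and
   height h: w-periodic and injective modulo w, and a local translation
   (hence a translation-isometry from R/wZ x (0,h) onto its image). *)
Definition horiz_cyl_chart (w h : R) (phi : R * R -> X) : Prop :=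
  [/\ 0 < w, 0 < h,
    (forall a b a' b', 0 < b < h -> 0 < b' < h ->
       (phi (a, b) = phi (a', b') <-> b = b' /\ exists z : int, a' = a + z%:~R * w)) &
    (forall a b, 0 < b < h -> exists2 e, 0 < e &
       forall v, ball0 e v -> Dev (phi (a, b)) v (phi (a + v.1, b + v.2)))].

Definition cyl_set (h : R) (phi : R * R -> X) (x : X) : Prop :=
  exists a b, 0 < b < h /\ x = phi (a, b).

Definition same_set (C D : X -> Prop) : Prop := forall x, C x <-> D x.

Definition is_horiz_cyl (C : X -> Prop) : Prop :=
  exists w h phi, horiz_cyl_chart w h phi /\ same_set C (cyl_set h phi).

Definition is_max_horiz_cyl (C : X -> Prop) : Prop :=
  is_horiz_cyl C /\
  forall D, is_horiz_cyl D -> (forall x, C x -> D x) -> same_set C D.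

Definition in_closure (C : X -> Prop) (x : X) : Prop :=
  forall e, 0 < e -> exists v y, [/\ ball0 e v, Dev x v y & C y].

Definition horiz_cyl_decomposition (F : (X -> Prop) -> Prop) : Prop :=
  [/\ forall C, F C -> is_max_horiz_cyl C,
      forall C D, F C -> F D -> (exists x, C x /\ D x) -> same_set C D &
      forall x, exists C, F C /\ in_closure C x].

(* In the chart phi (circumference w, height h), f acts as the m-th power of
   the (affine) Dehn twist (a, b) |-> (a + w b / h, b). *)
Definition twist_power (f : X -> X) (m : nat) (w h : R) (phi : R * R -> X) : Prop :=
  forall a b, 0 < b < h -> f (phi (a, b)) = phi (a + m%:R * w * b / h, b).

Definition band (n : nat) (x : X) : Prop := ss n < (sval x).2 < ss n.+1.

End Ladder.

Definition parabolic (R : realType) (c : R) : 'M[R]_2 :=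
  \matrix_(i < 2, j < 2) (if i == j then 1 else if (i == 0) && (j == 1) then c else 0).

Arguments ss {R} lam m.
Arguments in_region {R} lam p.
Arguments onLH {R} lam m p.
Arguments onLV {R} lam n p.
Arguments onUH {R} lam n p.
Arguments onUV {R} lam m p.
Arguments glueLU {R} lam a b.
Arguments onL {R} lam p.
Arguments onU {R} lam p.
Arguments inPoly {R} lam p.
Arguments inX {R} lam p.
Arguments X {R} lam.
Arguments Rep {R} lam x p.
Arguments Dev {R} lam x v y.
Arguments locally_affine {R} lam f A.
Arguments affine_homeo {R} lam f A.
Arguments in_Veech {R} lam M.
Arguments horiz_cyl_chart {R} lam w h phi.
Arguments cyl_set {R} lam h phi x.
Arguments same_set {R} lam C D.
Arguments is_horiz_cyl {R} lam C.
Arguments is_max_horiz_cyl {R} lam C.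
Arguments in_closure {R} lam C x.
Arguments horiz_cyl_decomposition {R} lam F.
Arguments twist_power {R} lam f m w h phi.
Arguments band {R} lam n x.

(* Main.v *)
Require Import Defs.
From HB Require Import structures.
From mathcomp Require Import all_boot all_order all_algebra.
From mathcomp Require Import boolp classical_sets reals.
From mathcomp Require Import zify ring lra.
Import Defs.
Set Implicit Arguments. Unset Strict Implicit. Unset Printing Implicit Defensive.
Import Order.TTheory GRing.Theory Num.Theory.
Local Open Scope ring_scope.

Section S1.
Variable R : realType.
Variable lam : R.
Hypothesis lam_gt0 : 0 < lam.
Local Notation s := (ss lam).

Lemma s0 : s 0 = 0. Proof. by rewrite /ss big_ord0. Qed.
Lemma sS m : s m.+1 = s m + lam ^+ m. Proof. by rewrite /ss big_ord_recr. Qed.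
Lemma s1 : s 1 = 1. Proof. by rewrite sS s0 add0r expr0. Qed.
Lemma s_ge0 m : 0 <= s m.
Proof. elim: m => [|m IH]; first by rewrite s0. rewrite sS; apply: addr_ge0 => //; exact: exprn_ge0 (ltW lam_gt0). Qed.
Lemma s_lt_S m : s m < s m.+1.
Proof. by rewrite sS ltrDl exprn_gt0. Qed.
Lemma s_ltn m n : (m < n)%N -> s m < s n.
Proof.
elim: n => [|n IH]; first by []. rewrite ltnS leq_eqVlt => /orP [/eqP -> | /IH h]; first exact: s_lt_S.
exact: lt_trans h (s_lt_S n).
Qed.
Lemma s_ltE m n : (s m < s n) = (m < n)%N.
Proof.
apply/idP/idP; last exact: s_ltn.
apply: contraLR; rewrite -leqNgt -leNgt leq_eqVlt => /orP [/eqP -> // | /s_ltn /ltW //].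
Qed.
Lemma s_leE m n : (s m <= s n) = (m <= n)%N.
Proof. by rewrite leNgt s_ltE -leqNgt. Qed.
Lemma s_eqE m n : (s m == s n) = (m == n).
Proof. by rewrite eq_le !s_leE -eqn_leq. Qed.
Lemma s_inj m n : s m = s n -> m = n.
Proof. by move/eqP; rewrite s_eqE => /eqP. Qed.

Lemma ix_lt_lt a b x : s a < x -> x < s b -> (a < b)%N.
Proof. by move=> h1 h2; rewrite -s_ltE (lt_trans h1 h2). Qed.
Lemma ix_le_lt a b x : s a <= x -> x < s b -> (a < b)%N.
Proof. by move=> h1 h2; rewrite -s_ltE (le_lt_trans h1 h2). Qed.
Lemma ix_lt_le a b x : s a < x -> x <= s b -> (a < b)%N.
Proof. by move=> h1 h2; rewrite -s_ltE (lt_le_trans h1 h2). Qed.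
Lemma ix_le_le a b x : s a <= x -> x <= s b -> (a <= b)%N.
Proof. by move=> h1 h2; rewrite -s_leE (le_trans h1 h2). Qed.

Lemma find_idx N x : 0 <= x -> x < s N -> exists2 m, (m < N)%N & s m <= x < s m.+1.
Proof.
elim: N => [|N IH] x0 xN; first by move: xN; rewrite s0 => /(le_lt_trans x0); rewrite ltxx.
case: (ltP x (s N)) => h; first by case: (IH x0 h) => m mN hm; exists m => //; exact: ltnW.
by exists N => //; rewrite h.
Qed.

Definition inband j (q : R * R) := (s j < q.2) && (q.2 < s j.+1).
Definition isB (q : R * R) := exists j, q.2 = s j.

Lemma band_uniq i j q : inband i q -> inband j q -> i = j.
Proof.
move=> /andP[a1 a2] /andP[b1 b2]; have h1 := ix_lt_lt a1 b2; have h2 := ix_lt_lt b1 a2; lia.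
Qed.

Lemma band_notB j q : inband j q -> ~ isB q.
Proof.
move=> /andP[a1 a2] [i e]; rewrite e in a1 a2.
move: a1 a2; rewrite !s_ltE => a1 a2; lia.
Qed.

Lemma RC q : in_region lam q <->
  (exists j, inband j q /\ s j.-1 < q.1 < s j.+2) \/
  (exists j, [/\ (0 < j)%N, q.2 = s j & s j.-1 < q.1 < s j.+1]).
Proof.
split.
- move=> [m [n [/andP[h1 h2] h3 /andP[h4 h5] h6]]].
  move: h4; rewrite le_eqVlt => /orP [/eqP e | h4].
  + right; exists n; split => //.
    * case: n e h3 {h5 h6} => // e; rewrite -e s0 => h3.
      by move: (le_lt_trans (s_ge0 _) h3); rewrite ltxx.
    * rewrite h6 /=; rewrite -e s_ltE in h3.
      by apply: (lt_le_trans h2); rewrite s_leE; lia.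
  + left; exists n; split; first by rewrite /inband h4 h5.
    rewrite h6 /=; have := ix_lt_lt h3 h5 => hh.
    by apply: (lt_le_trans h2); rewrite s_leE; lia.
- case=> [[j [/andP[a1 a2] /andP[b1 b2]]] | [j [j0 e /andP[b1 b2]]]].
  + have x0 : 0 <= q.1 by exact: ltW (le_lt_trans (s_ge0 _) b1).
    case: (find_idx x0 b2) => m mj hm; exists m, j; split => //.
    * by apply: le_lt_trans a1; rewrite s_leE; lia.
    * by rewrite (ltW a1) a2.
  + have x0 : 0 <= q.1 by exact: ltW (le_lt_trans (s_ge0 _) b1).
    case: (find_idx x0 b2) => m mj hm; exists m, j; split => //.
    * by rewrite e s_ltE; lia.
    * by rewrite e lexx s_lt_S.
Qed.

Ltac sdes := repeat match goal with
  | H : is_true ((_ < _) && (_ < _)) |- _ => move/andP: H => [? ?]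
  | H : is_true ((_ <= _) && (_ < _)) |- _ => move/andP: H => [? ?]
  | H : is_true ((_ < _) && (_ <= _)) |- _ => move/andP: H => [? ?]
  | H : is_true ((_ <= _) && (_ <= _)) |- _ => move/andP: H => [? ?]
  | H : _ /\ _ |- _ => case: H => [? ?]
  end.


Ltac ix1 := match goal with
 | H1 : is_true (s ?a < ?x), H2 : is_true (?x < s ?b) |- _ =>
     lazymatch goal with | _ : is_true (a < b)%N |- _ => fail | _ => have := ix_lt_lt H1 H2; move=> ? end
 | H1 : is_true (s ?a <= ?x), H2 : is_true (?x < s ?b) |- _ =>
     lazymatch goal with | _ : is_true (a < b)%N |- _ => fail | _ => have := ix_le_lt H1 H2; move=> ? end
 | H1 : is_true (s ?a < ?x), H2 : is_true (?x <= s ?b) |- _ =>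
     lazymatch goal with | _ : is_true (a < b)%N |- _ => fail | _ => have := ix_lt_le H1 H2; move=> ? end
 | H1 : is_true (s ?a <= ?x), H2 : is_true (?x <= s ?b) |- _ =>
     lazymatch goal with | _ : is_true (a <= b)%N |- _ => fail | _ => have := ix_le_le H1 H2; move=> ? end
 end.

Ltac sfin := unfold inband, onUH, onUV, onLH, onLV in *; simpl in *; sdes;
  repeat match goal with
  | H : ?v = s _ |- _ => is_var v; subst v
  | H : s _ = ?v |- _ => is_var v; subst v
  end;
  repeat match goal with
  | H : is_true (s _ < s _) |- _ => rewrite s_ltE in H
  | H : is_true (s _ <= s _) |- _ => rewrite s_leE in H
  | H : s ?a = s ?b |- _ => move/s_inj: H => H
  end;
  repeat ix1; lia.

Lemma reg_notLH m x y : in_region lam (x, y) -> onLH lam m (x, y) -> False.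
Proof. rewrite RC /onLH; case=> [[j [h1 h2]]|[j [h0 h1 h2]]] [h3 h4]; sfin. Qed.


Ltac regcase H := rewrite RC in H; case: H => [[? [? ?]]|[? [? ? ?]]].

Lemma reg_notLV n x y : in_region lam (x, y) -> onLV lam n (x, y) -> False.
Proof. move=> H; regcase H; move=> [? [? ?]]; sfin. Qed.
Lemma reg_notUH n x y : in_region lam (x, y) -> onUH lam n (x, y) -> False.
Proof. move=> H; regcase H; move=> [? [? ?]]; sfin. Qed.
Lemma reg_notUV n x y : in_region lam (x, y) -> onUV lam n (x, y) -> False.
Proof. move=> H; regcase H; move=> [? ?]; sfin. Qed.
Lemma LH_notUH m n x y : onLH lam m (x, y) -> onUH lam n (x, y) -> False.
Proof. move=> [? ?] [? [? ?]]; sfin. Qed.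
Lemma LH_notUV m n x y : onLH lam m (x, y) -> onUV lam n (x, y) -> False.
Proof. move=> [? ?] [? ?]; sfin. Qed.
Lemma LV_notUH m n x y : onLV lam m (x, y) -> onUH lam n (x, y) -> False.
Proof. move=> [? [? ?]] [? [? ?]]; sfin. Qed.
Lemma LV_notUV m n x y : onLV lam m (x, y) -> onUV lam n (x, y) -> False.
Proof. move=> [? [? ?]] [? ?]; sfin. Qed.
Lemma LH_notLV m n x y : onLH lam m (x, y) -> onLV lam n (x, y) -> False.
Proof. move=> [? ?] [? [? ?]]; sfin. Qed.

Lemma reg_notU q : in_region lam q -> onU lam q -> False.
Proof. case: q => x y h [[n hn]|[n hn]]; [exact: reg_notUH h hn|exact: reg_notUV h hn]. Qed.
Lemma L_notU q : onL lam q -> onU lam q -> False.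
Proof.
case: q => x y [[m hm]|[m hm]] [[n hn]|[n hn]];
  [exact: LH_notUH hm hn|exact: LH_notUV hm hn|exact: LV_notUH hm hn|exact: LV_notUV hm hn].
Qed.
Lemma X_notU q : inX lam q -> onU lam q -> False.
Proof. case=> h; [exact: reg_notU|exact: L_notU]. Qed.
Lemma reg_notL q : in_region lam q -> onL lam q -> False.
Proof. case: q => x y h [[n hn]|[n hn]]; [exact: reg_notLH h hn|exact: reg_notLV h hn]. Qed.


Lemma LH_uniq m m' q : onLH lam m q -> onLH lam m' q -> m = m'.
Proof. case: q => x y [? ?] [? ?]; apply/eqP; rewrite eqn_leq; apply/andP; split; sfin. Qed.
Lemma LV_uniq m m' q : onLV lam m q -> onLV lam m' q -> m = m'.
Proof. case: q => x y [? [? ?]] [? [? ?]]; apply/eqP; rewrite eqn_leq; apply/andP; split; sfin. Qed.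

Lemma glue_cases a b : glueLU lam a b ->
  (exists m, onLH lam m a /\ b = (a.1, s m.+2)) \/
  (exists n, onLV lam n a /\ b = (s n.-2, a.2)).
Proof.
case=> [[m [hm ->]]|[n [hn ->]]].
- by left; exists m; split => //; case: hm => _ ->; congr (_, _); rewrite addrC subrK.
- by right; exists n; split => //; case: hn => _ [-> _]; congr (_, _); rewrite opprB addrC subrK.
Qed.

Lemma glue_onU a b : glueLU lam a b -> onU lam b.
Proof.
move/glue_cases => [[m [[h1 h2] ->]]|[n [[n0 [h1 h2]] ->]]].
- by left; exists m.+1; split => //.
- right; exists n.-1; split => //=.
  by rewrite prednK.
Qed.

Lemma glue_LH a b m : glueLU lam a b -> onLH lam m a -> b = (a.1, s m.+2).
Proof.
move/glue_cases => [[m' [hm ->]]|[n [hn ->]]] h.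
- by rewrite (LH_uniq h hm).
- by case: a h hn => x y h hn; case: (LH_notLV h hn).
Qed.

Lemma glue_LV a b n : glueLU lam a b -> onLV lam n a -> b = (s n.-2, a.2).
Proof.
move/glue_cases => [[m' [hm ->]]|[n' [hn ->]]] h.
- by case: a h hm => x y h hm; case: (LH_notLV hm h).
- by rewrite (LV_uniq h hn).
Qed.

Lemma glue_UH a b n : glueLU lam a b -> onUH lam n b -> a = (b.1, s n.-2) /\ onLH lam n.-1 a.
Proof.
move/glue_cases => [[m [hm eb]]|[n' [hn eb]]] hb.
- have e : n = m.+1.
    by move: hb; rewrite eb /onUH /onLV /= => [[_ [/s_inj [->] _]]].
  subst n; split => //; case: a hm eb {hb} => x y [h1 h2] eb; rewrite eb /=.
  by congr (_, _).
- case: a hn eb hb => x y [? [? ?]] -> [? [? ?]]; exfalso; sfin.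
Qed.

Lemma Rep_inPoly x p : Rep lam x p -> inPoly lam p.
Proof.
case=> [->|/glue_onU h]; last by constructor 3.
by case: (svalP x) => h; [constructor 1|constructor 2].
Qed.


Definition W j := s j.+2 - s j.-1.
Lemma W_gt0 j : 0 < W j.
Proof. by rewrite /W subr_gt0 s_ltE; lia. Qed.

Lemma X_band q j : inX lam q -> inband j q -> s j.-1 < q.1 <= s j.+2.
Proof.
case: q => x y [H|[[m hm]|[n hn]]] hb.
- move/RC: H => [[j' [hb' /andP[a b]]]|[j' [j0 e _]]].
  + have e := band_uniq hb hb'; subst; by rewrite a ltW.
  + by exfalso; apply: (band_notB hb); exists j'.
- exfalso; case: hm => _ e; apply: (band_notB hb); by exists m.-1.
- case: hn => [n0 [e hy]]; simpl in *; subst x.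
  have e : n = j.+1 by sfin.
  by subst n; rewrite lexx andbT; move: hb hy => /andP[? ?] /andP[? ?]; rewrite s_ltE; lia.
Qed.

Lemma inPoly_band q j : inPoly lam q -> inband j q -> s j.-1 <= q.1 <= s j.+2.
Proof.
case: q => x y [H|H|[[n hn]|[n hn]]] hb.
- by move: (X_band (or_introl H) hb) => /andP[a b]; rewrite (ltW a) b.
- by move: (X_band (or_intror H) hb) => /andP[a b]; rewrite (ltW a) b.
- exfalso; case: hn => _ [e _]; apply: (band_notB hb); by exists n.+1.
- case: hn => hy e; simpl in *; subst x.
  have e : n = j by sfin.
  by subst n; rewrite lexx /= s_leE; lia.
Qed.

Lemma strip_inPoly q j : inband j q -> s j.-1 <= q.1 <= s j.+2 -> inPoly lam q.
Proof.
case: q => x y hb /andP[a b]; simpl in *.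
move: a; rewrite le_eqVlt => /orP[/eqP e|a].
  by constructor 3; right; exists j; split.
move: b; rewrite le_eqVlt => /orP[/eqP e|b].
  by constructor 2; right; exists j.+1; split => //; split.
by constructor 1; rewrite RC; left; exists j; split => //; rewrite a b.
Qed.

Lemma strip_inX q j : inband j q -> s j.-1 < q.1 <= s j.+2 -> inX lam q.
Proof.
case: q => x y hb /andP[a b]; simpl in *.
move: b; rewrite le_eqVlt => /orP[/eqP e|b].
  by right; right; exists j.+1; split => //; split.
by left; rewrite RC; left; exists j; split => //; rewrite a b.
Qed.

Lemma X_cases q : inX lam q -> (exists j, inband j q) \/ isB q.
Proof.
case: q => x y [H|[[m hm]|[n hn]]].
- move/RC: H => [[j' [hb' _]]|[j' [j0 e _]]].
  + by left; exists j'.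
  + by right; exists j'.
- by right; case: hm => _ e; exists m.-1.
- left; exists n.-1; case: hn => n0 [_ /andP [a b]]; rewrite /inband /= a prednK //.
Qed.

Lemma Rep_band x p j : Rep lam x p -> inband j (sval x) ->
  p = sval x \/ (p = ((sval x).1 - W j, (sval x).2) /\ (sval x).1 = s j.+2).
Proof.
case=> [->|g hb]; first by left.
right; case/glue_cases: g => [[m [[_ e] _]]|[n [hn ->]]].
  by exfalso; apply: (band_notB hb); exists m.-1.
case: hn => n0 [e hy].
have en : n = j.+1 by move: hb hy; rewrite /inband; move=> /andP[? ?] /andP[? ?]; sfin.
subst n; split => //; rewrite e /W; congr (_, _); rewrite opprB addrC subrK //.
Qed.

Lemma Rep_B x p : Rep lam x p -> isB (sval x) -> isB p.
Proof.
case=> [->//|g] [i ei].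
case/glue_cases: g => [[m [[_ e] ->]]|[n [hn ->]]]; first by exists m.+2.
by exists i.
Qed.

Lemma Rep_nB x p : Rep lam x p -> ~ isB (sval x) -> p.2 = (sval x).2.
Proof.
case=> [->//|g] hB.
case/glue_cases: g => [[m [[_ e] ->]]|[n [hn ->]]] //.
by exfalso; apply: hB; exists m.-1.
Qed.

Definition red j u := u + (Num.floor ((s j.+2 - u) / W j))%:~R * W j.

Lemma red_range j u : s j.-1 < red j u <= s j.+2.
Proof.
rewrite /red; have := floor_itv ((s j.+2 - u) / W j).
set z := Num.floor _; move=> /andP[a b].
have hW := W_gt0 j.
rewrite -(ler_pM2r hW) divfK ?gt_eqF // in a.
rewrite -(ltr_pM2r hW) divfK ?gt_eqF // in b.
rewrite intrD mulrDl mul1r in b.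
apply/andP; split; last by rewrite -lerBrDl.
move: b; rewrite /W; rewrite -ltrBrDl; lra.
Qed.

Lemma red_per j u (z : int) : red j (u + z%:~R * W j) = red j u.
Proof.
rewrite /red.
have -> : (s j.+2 - (u + z%:~R * W j)) / W j = (s j.+2 - u) / W j + (- z)%:~R.
  have hW : W j != 0 by rewrite gt_eqF ?W_gt0.
  by rewrite intrN; field.
rewrite floorDrz ?intr_int // intrKfloor intrD mulrDl intrN.
ring.
Qed.

Lemma red_id j u : s j.-1 < u <= s j.+2 -> red j u = u.
Proof.
move=> /andP[a b]; rewrite /red.
have -> : Num.floor ((s j.+2 - u) / W j) = 0; last by rewrite mul0r addr0.
apply: floor_def; rewrite add0r; apply/andP; split.
  by apply: divr_ge0; [rewrite subr_ge0 | exact: ltW (W_gt0 j)].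
by rewrite ltr_pdivrMr ?W_gt0 // mul1r /W; move: a; lra.
Qed.

Lemma red_eq j u : exists z : int, red j u = u + z%:~R * W j.
Proof. by eexists. Qed.

Lemma red_red j u d : red j (red j u + d) = red j (u + d).
Proof. rewrite /red; set z := Num.floor ((s j.+2 - u) / W j).
have -> : u + z%:~R * W j + d = (u + d) + z%:~R * W j by ring.
by rewrite -/(red j _) red_per.
Qed.


Lemma red_low j : red j (s j.-1) = s j.+2.
Proof.
have -> : s j.-1 = s j.+2 + (-1)%:~R * W j by rewrite /W; ring.
by rewrite red_per red_id // s_ltE lexx; apply/andP; split => //; lia.
Qed.

Lemma sval_inj (x y : X lam) : sval x = sval y -> x = y.
Proof.
case: x => p hp; case: y => q hq /= e; subst q; congr exist; exact: Prop_irrelevance.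
Qed.

Lemma d0_proof : inX lam (2^-1, 2^-1).
Proof.
have a : (0:R) < 2^-1 by rewrite invr_gt0 ltr0n.
have b : (2^-1 : R) < 1 by rewrite invf_lt1 // ltr1n.
apply: (@strip_inX _ 0); rewrite /inband /= ?s0 ?s1 ?a ?b //.
rewrite sS s1 expr1 /=; apply: le_trans (ltW b) _.
by rewrite lerDl ltW.
Qed.
Definition d0 : X lam := exist _ _ d0_proof.

Definition mk q : X lam :=
  match pselect (inX lam q) with left h => exist _ q h | right _ => d0 end.
Lemma mkE q : inX lam q -> sval (mk q) = q.
Proof. by rewrite /mk; case: (pselect _). Qed.
Lemma mk_sval x : mk (sval x) = x.
Proof. apply: sval_inj; apply: mkE; exact: svalP. Qed.

Definition bp j u y := mk (red j u, y).
Lemma bpE j u y : s j < y < s j.+1 -> sval (bp j u y) = (red j u, y).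
Proof. move=> hy; apply: mkE; apply: (@strip_inX _ j) => //=; exact: red_range. Qed.
Lemma bp_X x j : inband j (sval x) -> x = bp j (sval x).1 (sval x).2.
Proof.
move=> hb; apply: sval_inj; rewrite bpE // red_id; last exact: X_band (svalP x) hb.
by case: (sval x).
Qed.
Lemma bp_per j u y (z : int) : bp j (u + z%:~R * W j) y = bp j u y.
Proof. by rewrite /bp red_per. Qed.
Lemma bp_red j u d y : bp j (red j u + d) y = bp j (u + d) y.
Proof. by rewrite /bp red_red. Qed.
Lemma bp_redc j u y : bp j (red j u) y = bp j u y.
Proof. by have := bp_red j u 0 y; rewrite !addr0. Qed.

Lemma Rep_bp q j : inPoly lam q -> inband j q -> Rep lam (bp j q.1 q.2) q.
Proof.
move=> hP hb; have := inPoly_band hP hb => /andP[a b].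
have hy : s j < q.2 < s j.+1 by [].
rewrite /Rep bpE //; move: a; rewrite le_eqVlt => /orP[/eqP e|a].
- right; right; exists j.+1; rewrite -e red_low; split.
    by split => //; split.
  case: q hP hb hy e {b} => x y /= _ _ _ <-; congr (_, _).
  ring.
- by left; rewrite red_id ?a //; case: q {hP hb hy a b}.
Qed.

Lemma RB z q j : Rep lam z q -> inband j q -> z = bp j q.1 q.2.
Proof.
move=> hR hb; case: hR => [e|g].
  by rewrite e in hb *; exact: bp_X.
case/glue_cases: g => [[m [[_ e] eq]]|[n [hn eq]]].
  by exfalso; apply: (band_notB hb); exists m.+2; rewrite eq.
case: hn => n0 [e1 hy]; rewrite eq in hb *.
have en : n = j.+1 by move: hb hy; rewrite /inband /=; move=> /andP[? ?] /andP[? ?]; sfin.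
subst n; rewrite /= -bp_redc red_low -e1 -bp_X //.
Qed.


Lemma conv_le (lo a d t : R) : lo <= a -> lo <= a + d -> 0 <= t <= 1 -> lo <= a + t * d.
Proof. move=> h1 h2 /andP[t0 t1]; nra. Qed.
Lemma conv_lt (lo a d t : R) : lo <= a -> lo < a + d -> 0 < t <= 1 -> lo < a + t * d.
Proof. move=> h1 h2 /andP[t0 t1]; nra. Qed.
Lemma conv_ge (hi a d t : R) : a <= hi -> a + d <= hi -> 0 <= t <= 1 -> a + t * d <= hi.
Proof. move=> h1 h2 /andP[t0 t1]; nra. Qed.
Lemma conv_gt (hi a d t : R) : a <= hi -> a + d < hi -> 0 < t <= 1 -> a + t * d < hi.
Proof. move=> h1 h2 /andP[t0 t1]; nra. Qed.

Lemma SEG p v j : inPoly lam p -> s j <= p.2 <= s j.+1 -> s j.-1 <= p.1 <= s j.+2 ->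
  inband j (addv p v) -> s j.-1 <= p.1 + v.1 <= s j.+2 ->
  forall t, 0 <= t <= 1 -> inPoly lam (addv p (scalev t v)).
Proof.
move=> hP /andP[a1 a2] /andP[b1 b2] /andP[c1 c2] /andP[d1 d2] t /andP[t0 t1].
move: t0; rewrite le_eqVlt => /orP[/eqP <-|t0].
  by case: p hP {a1 a2 b1 b2 c1 c2 d1 d2} => x y; rewrite /addv /scalev /= !mul0r !addr0.
have ht : 0 < t <= 1 by rewrite t0 t1.
have ht' : 0 <= t <= 1 by rewrite ltW.
apply: (@strip_inPoly _ j); rewrite /inband /addv /scalev /=.
  by rewrite (conv_lt a1 c1 ht) (conv_gt a2 c2 ht).
by rewrite (conv_le b1 d1 ht') (conv_ge b2 d2 ht').
Qed.

Lemma Dev_mk x p v j : Rep lam x p ->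
  (forall t, 0 <= t <= 1 -> inPoly lam (addv p (scalev t v))) ->
  inband j (addv p v) -> Dev lam x v (bp j (p.1 + v.1) (p.2 + v.2)).
Proof.
move=> hR hseg hb; exists p; split => //.
have := hseg 1; rewrite lexx ler01 => /(_ isT).
have -> : addv p (scalev 1 v) = addv p v by rewrite /addv /scalev !mul1r.
by move=> hP; exact: Rep_bp hP hb.
Qed.

Lemma s_m1_le2 j : s j.-1 <= s j.+2. Proof. by rewrite s_leE; lia. Qed.

Definition rho j u : R := if red j u < s j.+2 then Order.min (red j u - s j.-1) (s j.+2 - red j u) else W j.
Lemma rho_gt0 j u : 0 < rho j u.
Proof.
rewrite /rho; case: ifP => h; last exact: W_gt0.
have := red_range j u => /andP[a _]; rewrite lt_min !subr_gt0 a h //.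
Qed.

Lemma band_dev j u y v : s j < y < s j.+1 ->
  `|v.2| < Num.min (y - s j) (s j.+1 - y) -> `|v.1| < rho j u ->
  Dev lam (bp j u y) v (bp j (u + v.1) (y + v.2)).
Proof.
move=> hy hv2 hv1; have := red_range j u => /andP[r1 r2].
move: hv2; rewrite lt_min !ltr_norml => /andP[/andP[e1 e2] /andP[e3 e4]].
have hb : inband j (addv (red j u, y) v) by rewrite /inband /addv /=; apply/andP; split; lra.
have hyc : s j <= y <= s j.+1 by move: hy => /andP[a b]; rewrite !ltW.
have hr : Rep lam (bp j u y) (red j u, y) by left; rewrite bpE.
have hs := @SEG (red j u, y) v j (Rep_inPoly hr) hyc.
have hD := @Dev_mk _ _ v j hr.
case: (ltP (red j u) (s j.+2)) => hlt.
- move: hv1; rewrite /rho hlt lt_min !ltr_norml => /andP[/andP[g1 g2] /andP[g3 g4]].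
  have h1 : s j.-1 <= (red j u, y).1 <= s j.+2 by rewrite /= (ltW r1) r2.
  have h2 : s j.-1 <= (red j u, y).1 + v.1 <= s j.+2 by rewrite /=; apply/andP; split; lra.
  by have := hD (hs h1 hb h2) hb; rewrite /= bp_red.
- have eS : red j u = s j.+2 by apply/eqP; rewrite eq_le r2 hlt.
  move: hv1; rewrite /rho (ltNge (red j u)) hlt /= ltr_norml => /andP[f1 f2].
  have h1 : s j.-1 <= (red j u, y).1 <= s j.+2 by rewrite /= (ltW r1) r2.
  case: (lerP v.1 0) => hv.
  + have h2 : s j.-1 <= (red j u, y).1 + v.1 <= s j.+2.
      by rewrite /= eS; apply/andP; split; [move: f1; rewrite /W; lra | lra].
    by have := hD (hs h1 hb h2) hb; rewrite /= bp_red.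
  + have hr' : Rep lam (bp j u y) (s j.-1, y).
      have eb : bp j u y = bp j (s j.-1, y).1 (s j.-1, y).2.
        by rewrite /= -(bp_redc j (s j.-1)) red_low -eS bp_redc.
      have hyb : inband j (s j.-1, y) by exact: hy.
      rewrite eb; apply: (Rep_bp _ hyb); apply: (strip_inPoly hyb).
      by rewrite /= lexx s_m1_le2.
    have hb' : inband j (addv (s j.-1, y) v) by rewrite /inband /addv /=; apply/andP; split; lra.
    have h1' : s j.-1 <= (s j.-1, y).1 <= s j.+2 by rewrite /= lexx s_m1_le2.
    have h2' : s j.-1 <= (s j.-1, y).1 + v.1 <= s j.+2.
      by rewrite /=; apply/andP; split; [lra | move: f2; rewrite /W; lra].
    have := @Dev_mk _ _ v j hr' (@SEG (s j.-1, y) v j (Rep_inPoly hr') hyc h1' hb' h2') hb'.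
    by rewrite /= -(bp_red _ (s j.-1)) red_low -eS bp_red.
Qed.



Lemma min4 (a b c d : R) : 0 < a -> 0 < b -> 0 < c -> 0 < d ->
  exists2 mu : R, 0 < mu & [/\ mu * 2 <= a, mu * 2 <= b, mu * 2 <= c & mu * 2 <= d].
Proof.
move=> ha hb hc hd; exists (Num.min (Num.min a b) (Num.min c d) / 2).
  by rewrite divr_gt0 // !lt_min ha hb hc hd.
rewrite divfK ?pnatr_eq0 //; split; rewrite !ge_min lexx ?orbT //.
Qed.

Lemma inPoly_nonneg r : inPoly lam r -> 0 <= r.2.
Proof.
case: r => x y [H|[[m [_ e]]|[n [_ [_ /andP[a _]]]]]|[[n [_ [e _]]]|[m [/andP[a _] _]]]]; rewrite /=.
- move/RC: H => [[j [/andP[a _] _]]|[j [_ e _]]].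
  + exact: ltW (le_lt_trans (s_ge0 _) a).
  + by rewrite /= in e; rewrite e; exact: s_ge0.
- by rewrite /= in e; rewrite e; exact: s_ge0.
- exact: ltW (le_lt_trans (s_ge0 _) a).
- by rewrite /= in e; rewrite e; exact: s_ge0.
- exact: ltW (le_lt_trans (s_ge0 _) a).
Qed.

Lemma inPoly_below r k : inPoly lam r -> r.2 < s k -> r.1 <= s k.+1.
Proof.
case: r => x y [H|[[m hm]|[n hn]]|[[n hn]|[m hm]]] /= hk.
- move/RC: H => [[j [? /andP[? b]]]|[j [? e /andP[? b]]]].
  + apply: ltW (lt_le_trans b _); rewrite s_leE; sfin.
  + apply: ltW (lt_le_trans b _); rewrite s_leE; sfin.
- case: hm => /andP[? b] ?; apply: ltW (lt_le_trans b _); rewrite s_leE; sfin.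
- case: hn => ? [e ?]; rewrite /= in e; rewrite e s_leE; sfin.
- case: hn => ? [? /andP[? b]]; apply: ltW (lt_le_trans b _); rewrite s_leE; sfin.
- case: hm => ? e; rewrite /= in e; rewrite e s_leE; sfin.
Qed.

Lemma inPoly_above r k : inPoly lam r -> s k < r.2 -> s k.-1 <= r.1.
Proof.
case: r => x y [H|[[m hm]|[n hn]]|[[n hn]|[m hm]]] /= hk.
- move/RC: H => [[j [? /andP[b ?]]]|[j [? e /andP[b ?]]]].
  + apply: ltW (le_lt_trans _ b); rewrite s_leE; sfin.
  + apply: ltW (le_lt_trans _ b); rewrite s_leE; sfin.
- case: hm => /andP[b ?] ?; apply: ltW (le_lt_trans _ b); rewrite s_leE; sfin.
- case: hn => ? [e ?]; rewrite /= in e; rewrite e s_leE; sfin.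
- case: hn => ? [? /andP[b ?]]; apply: ltW (le_lt_trans _ b); rewrite s_leE; sfin.
- case: hm => ? e; rewrite /= in e; rewrite e s_leE; sfin.
Qed.


Lemma nat_aux2 m : (m.+1 <= m.-1.+2)%N. Proof. lia. Qed.

Lemma s_mono a b : (a <= b)%N -> s a <= s b.
Proof. by rewrite s_leE. Qed.

Lemma B_local x : isB (sval x) -> exists2 mu, 0 < mu &
  forall p v, Rep lam x p -> `|v.1| < mu -> `|v.2| < mu -> v.2 != 0 ->
    inPoly lam (addv p v) ->
    exists j, [/\ inband j (addv p v), (p.2 = s j \/ p.2 = s j.+1),
                  s j.-1 + mu <= p.1 & p.1 <= s j.+2 - mu].
Proof.
case: x => [[x1 y] hX] /= hB.
have hX' := hX; case: hX' => [H|[[m hm]|[n hn]]].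
- move/RC: H => [[j [hb _]]|[i [i0 ey /andP[hx1 hx2]]]].
    by case: (band_notB hb hB).
  rewrite /= in ey hx1 hx2; subst y.
  have h1 : 0 < s i - s i.-1 by rewrite subr_gt0 s_ltE; lia.
  have h2 : 0 < s i.+1 - s i by rewrite subr_gt0 s_ltE; lia.
  have [mu mu0 [m1 m2 m3 m4]] := min4 (ltac:(by rewrite subr_gt0) : 0 < x1 - s i.-1) (ltac:(by rewrite subr_gt0) : 0 < s i.+1 - x1) h1 h2.
  exists mu => // p v hR hv1 hv2 hv0 hP.
  have ep : p = (x1, s i).
    case: hR => // g; exfalso; case/glue_cases: g => [[m [hm _]]|[n [hn _]]].
    + by apply: (@reg_notLH m x1 (s i)) => //; rewrite RC; right; exists i; split => //; rewrite hx1.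
    + by apply: (@reg_notLV n x1 (s i)) => //; rewrite RC; right; exists i; split => //; rewrite hx1.
  subst p; move: hv2; rewrite ltr_norml => /andP[v1 v2].
  have s12 := s_mono (leqnSn i.+1).
  have s01 := s_mono (leq_pred i.-1).
  case: (ltrgtP v.2 0) hv0 => // hs _.
  + exists i.-1; split.
    * rewrite /inband /addv /= prednK //; apply/andP; split; lra.
    * by right; rewrite prednK.
    * rewrite /=; lra.
    * rewrite /= prednK //; lra.
  + exists i; split.
    * rewrite /inband /addv /=; apply/andP; split; lra.
    * by left.
    * rewrite /=; lra.
    * rewrite /=; lra.
- case: hm => /andP[hx1 hx2] ey; rewrite /= in hx1 hx2 ey; subst y.
  have h1 : 0 < s (m.-1).+1 - s m.-1 by rewrite subr_gt0 s_ltE.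
  have h2 : 0 < s m.+2 - s m.+1 by rewrite subr_gt0 s_ltE.
  have [mu mu0 [m1 m2 m3 m4]] := min4 (ltac:(by rewrite subr_gt0) : 0 < x1 - s m) (ltac:(by rewrite subr_gt0) : 0 < s m.+1 - x1) h1 h2.
  exists mu => // p v hR hv1 hv2 hv0 hP.
  move: hv2 hv1; rewrite !ltr_norml => /andP[v1 v2] /andP[w1 w2].
  have hLH : onLH lam m (x1, s m.-1) by split; [rewrite /= hx1 hx2 | by []].
  have sa : s m.-2 <= s m by apply: s_mono; exact: leq_trans (leq_pred _) (leq_pred _).
  have sb : s m.+1 <= s m.-1.+2 by apply: s_mono; exact: nat_aux2.
  case: hR => [ep|g].
  + subst p; case: (ltrgtP v.2 0) hv0 => // hs _.
    * exfalso; case: (posnP m) => [m0|mp].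
        by subst m; have := inPoly_nonneg hP; rewrite /addv /= s0; lra.
      have := @inPoly_below _ m.-1 hP.
      rewrite /addv /= prednK //; move=> /(_ ltac:(lra)); lra.
    * exists m.-1; split.
      -- rewrite /inband /addv /=; apply/andP; split; lra.
      -- by left.
      -- rewrite /=; lra.
      -- rewrite /=; lra.
  + have ep := glue_LH g hLH; subst p; rewrite /= in hP *.
    case: (ltrgtP v.2 0) hv0 => // hs _.
    * exists m.+1; split.
      -- rewrite /inband /addv /=; apply/andP; split; lra.
      -- by right.
      -- rewrite /=; lra.
      -- have := s_mono (leqnSn m.+2); have := s_mono (leqnSn m.+1); rewrite /=; lra.
    * exfalso; have := inPoly_above hP (_ : s m.+2 < (addv (x1, s m.+2) v).2).
      rewrite /addv /=; move=> /(_ ltac:(lra)); lra.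
- case: hn => n0 [_ /andP[a b]]; case: hB => i ei; rewrite /= in a b ei; subst y.
  exfalso; sfin.
Qed.


Definition idx (P : pred nat) : nat :=
  match pselect (exists j, P j) with left h => xchoose h | right _ => 0%N end.
Lemma idxP (P : pred nat) : (exists j, P j) -> P (idx P).
Proof. by rewrite /idx; case: (pselect _) => // h _; exact: xchooseP. Qed.

Definition jidx (y : R) := idx (fun j => (s j < y) && (y < s j.+1)).
Lemma jidxE j y : s j < y < s j.+1 -> jidx y = j.
Proof.
move=> h; have := @idxP (fun j => (s j < y) && (y < s j.+1)) (ex_intro _ j h).
rewrite -/(jidx y) => h'; exact: (@band_uniq _ _ (0, y) h' h).
Qed.

Definition shear (c : R) (x : X lam) : X lam :=
  match pselect (exists j, inband j (sval x)) with
  | left _ => bp (jidx (sval x).2) ((sval x).1 + c * ((sval x).2 - s (jidx (sval x).2))) (sval x).2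
  | right _ => x end.

Lemma shear_X_band c x j : inband j (sval x) ->
  shear c x = bp j ((sval x).1 + c * ((sval x).2 - s j)) (sval x).2.
Proof.
move=> hb; rewrite /shear; case: (pselect _) => [_|[]]; last by exists j.
by rewrite (jidxE hb).
Qed.

Lemma shear_B c x : isB (sval x) -> shear c x = x.
Proof.
move=> hB; rewrite /shear; case: (pselect _) => // [[j hb]].
by case: (band_notB hb hB).
Qed.

Lemma shear_bp c j u y : s j < y < s j.+1 -> shear c (bp j u y) = bp j (u + c * (y - s j)) y.
Proof.
move=> hy; have hb : inband j (sval (bp j u y)) by rewrite bpE.
by rewrite (shear_X_band _ hb) bpE //= bp_red.
Qed.

Lemma shearK c : cancel (shear c) (shear (- c)).
Proof.
move=> x; case: (X_cases (svalP x)) => [[j hb]|hB]; last by rewrite !shear_B.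
rewrite (shear_X_band _ hb) shear_bp //.
have e : (sval x).1 + c * ((sval x).2 - s j) + - c * ((sval x).2 - s j) = (sval x).1 by ring.
by rewrite e -bp_X.
Qed.

Lemma mapplyP (c : R) (v : R * R) : mapply (parabolic c) v = (v.1 + c * v.2, v.2).
Proof. by rewrite /mapply /parabolic !mxE /= !mul1r mul0r add0r. Qed.

Lemma ball_abs (e : R) (v : R * R) : 0 < e -> ball0 e v -> `|v.1| < e /\ `|v.2| < e.
Proof.
rewrite /ball0 => e0 hv.
have h1 : v.1 ^+ 2 < e ^+ 2 by have := sqr_ge0 v.2; lra.
have h2 : v.2 ^+ 2 < e ^+ 2 by have := sqr_ge0 v.1; lra.
split; rewrite ltNge; apply/negP => h.
- have := real_normK (num_real v.1); move: h1; rewrite !expr2 => h1 hn; nra.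
- have := real_normK (num_real v.2); move: h2; rewrite !expr2 => h2 hn; nra.
Qed.

Lemma lin_bound (a b c e : R) : `|a| < e -> `|b| < e -> `|a + c * b| < (1 + `|c|) * e.
Proof.
move=> ha hb; apply: le_lt_trans (ler_normD _ _) _; rewrite normrM.
have : `|c| * `|b| <= `|c| * e by rewrite ler_wpM2l // ltW.
rewrite mulrDl mul1r; lra.
Qed.


Lemma Rep_B_rev z r : Rep lam z r -> isB r -> isB (sval z).
Proof.
case=> [<-//|g] [i ei].
case/glue_cases: g => [[m [[_ e] _]]|[n [hn eq]]]; first by exists m.-1.
by exists i; rewrite -ei eq.
Qed.

Lemma LA c : (forall j, exists z : int, c * (s j.+1 - s j) = z%:~R * W j) ->
  locally_affine lam (shear c) (parabolic c).
Proof.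
move=> hc x; case: (X_cases (svalP x)) => [[j hb]|hB].
- have hy : s j < (sval x).2 < s j.+1 by [].
  set x1 := (sval x).1; set y := (sval x).2.
  set u' := x1 + c * (y - s j).
  have c0 : 0 < 1 + `|c| by rewrite ltr_pwDl.
  set e := Num.min (Num.min (y - s j) (s j.+1 - y)) (rho j u' / (1 + `|c|)).
  have e0 : 0 < e.
    move: hy => /andP[a b]; rewrite /e !lt_min !subr_gt0 a b /=.
    by rewrite divr_gt0 // rho_gt0.
  exists e => // v z hv [p [hRp hRz hseg]].
  have [hv1 hv2] := ball_abs e0 hv.
  have hv2' : `|v.2| < Num.min (y - s j) (s j.+1 - y).
    by apply: lt_le_trans hv2 _; rewrite /e ge_min lexx.
  have hv1' : `|v.1 + c * v.2| < rho j u'.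
    apply: lt_le_trans (lin_bound c hv1 hv2) _.
    rewrite mulrC -ler_pdivlMr //; rewrite /e ge_min lexx orbT //.
  have hpz : p.2 = y /\ exists zz : int, p.1 = x1 + zz%:~R * W j.
    case: (Rep_band hRp hb) => [->|[-> _]]; split => //.
      by exists 0; rewrite mul0r addr0.
    by exists (-1); rewrite /x1 /= mulN1r.
  case: hpz => hp2 [zz hp1].
  have hbv : inband j (addv p v).
    move: hv2'; rewrite lt_min !ltr_norml => /andP[/andP[a1 a2] /andP[b1 b2]].
    by rewrite /inband /addv /= hp2; apply/andP; split; lra.
  have ez := RB hRz hbv; rewrite /= hp1 hp2 in ez.
  have e1 : x1 + zz%:~R * W j + v.1 = (x1 + v.1) + zz%:~R * W j by ring.
  rewrite e1 bp_per in ez; rewrite ez.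
  have hyv : s j < y + v.2 < s j.+1 by move: hbv; rewrite /inband /addv /= hp2.
  rewrite shear_bp // (shear_X_band _ hb) mapplyP -/x1 -/y.
  have := @band_dev j u' y (v.1 + c * v.2, v.2) hy hv2' hv1'.
  rewrite /= -/u'.
  have -> : u' + (v.1 + c * v.2) = x1 + v.1 + c * (y + v.2 - s j) by rewrite /u'; ring.
  done.
- have [mu mu0 hmu] := B_local hB.
  have c0 : 0 < 1 + `|c| by rewrite ltr_pwDl.
  set e := mu / (1 + `|c|).
  have e0 : 0 < e by rewrite divr_gt0.
  have emu : e <= mu.
    rewrite /e ler_pdivrMr //; have := normr_ge0 c; nra.
  exists e => // v z hv [p [hRp hRz hseg]].
  have [hv1 hv2] := ball_abs e0 hv.
  rewrite (shear_B _ hB) mapplyP.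
  case: (eqVneq v.2 0) => hv0.
  + have hBz : isB (sval z).
      apply: (Rep_B_rev hRz); case: (Rep_B hRp hB) => i ei; exists i.
      by rewrite /addv /= hv0 addr0.
    rewrite (shear_B _ hBz) hv0 mulr0 addr0.
    have -> : (v.1, 0) = v by case: v hv0 {hv hv1 hv2 hRz hseg} => a b /= ->.
    by exists p.
  + have [j [hbj hp2 hl hr]] := hmu p v hRp (lt_le_trans hv1 emu) (lt_le_trans hv2 emu) hv0 (Rep_inPoly hRz).
    have ez := RB hRz hbj; rewrite ez.
    have hyv : s j < p.2 + v.2 < s j.+1 by exact: hbj.
    rewrite shear_bp //.
    have -> : bp j (p.1 + v.1 + c * (p.2 + v.2 - s j)) (p.2 + v.2) =
              bp j (p.1 + (v.1 + c * v.2)) (p.2 + v.2).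
      case: hp2 => ->.
      - by congr bp; ring.
      - have [zz hzz] := hc j.
        have -> : p.1 + v.1 + c * (s j.+1 + v.2 - s j) = p.1 + (v.1 + c * v.2) + zz%:~R * W j.
          by rewrite -hzz; ring.
        by rewrite bp_per.
    have hb' : inband j (addv p (v.1 + c * v.2, v.2)) by exact: hbj.
    have hL := lin_bound c hv1 hv2.
    have hL' : `|v.1 + c * v.2| < mu.
      by apply: lt_le_trans hL _; rewrite mulrC -ler_pdivlMr.
    move: hL'; rewrite ltr_norml => /andP[g1 g2].
    have hp2' : s j <= p.2 <= s j.+1.
      by case: hp2 => ->; rewrite lexx ?andbT ?ltW // s_lt_S.
    have hp1' : s j.-1 <= p.1 <= s j.+2 by apply/andP; split; lra.
    have hp1'' : s j.-1 <= p.1 + (v.1 + c * v.2, v.2).1 <= s j.+2 by rewrite /=; apply/andP; split; lra.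
    exact: (Dev_mk hRp (SEG (Rep_inPoly hRp) hp2' hp1' hb' hp1'') hb').
Qed.


Lemma LC (lo hi : R) (g : R -> R) :
  (forall t, lo < t < hi -> exists2 e, 0 < e &
     forall d, `|d| < e -> lo < t + d < hi -> g (t + d) = g t) ->
  forall t1 t2, lo < t1 < hi -> lo < t2 < hi -> g t1 = g t2.
Proof.
move=> hloc.
suff H : forall t1 t2, lo < t1 < hi -> lo < t2 < hi -> t1 <= t2 -> g t2 = g t1.
  move=> t1 t2 h1 h2; case: (leP t1 t2) => h; first by rewrite (H _ _ h1 h2 h).
  by rewrite (H _ _ h2 h1 (ltW h)).
move=> t1 t2 /andP[l1 r1] /andP[l2 r2] h12.
pose S : set R := fun t => t1 <= t <= t2 /\ forall u, t1 <= u <= t -> g u = g t1.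
have S1 : S t1.
  split; first by rewrite lexx h12.
  by move=> u /andP[a b]; have -> : u = t1 by apply/le_anti; rewrite a b.
have hs : has_sup S.
  by split; [exists t1 | exists t2 => t [/andP[_ b] _]].
have sg1 : t1 <= sup S := sup_upper_bound hs S1.
have sg2 : sup S <= t2 by apply: ge_sup; [exists t1 | move=> t [/andP[_ b] _]].
have hsg : lo < sup S < hi by apply/andP; split; lra.
have [e e0 he] := hloc _ hsg.
have [t [/andP[ht0 ht1] ht2] hte] := sup_adherent e0 hs.
have tsg : t <= sup S by apply: sup_upper_bound hs _ _; split => //; rewrite ht0 ht1.
have key : forall u, t1 <= u -> u < sup S + e -> u <= t2 -> g u = g t1.
  move=> u hu1 hu2 hu3; case: (leP u t) => hu; first by apply: ht2; rewrite hu1 hu.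
  have e1 : g u = g (sup S).
    have -> : u = sup S + (u - sup S) by ring.
    apply: he; first by rewrite ltr_norml; apply/andP; split; lra.
    have -> : sup S + (u - sup S) = u by ring.
    by apply/andP; split; lra.
  have e2 : g t = g (sup S).
    have -> : t = sup S + (t - sup S) by ring.
    apply: he; first by rewrite ltr_norml; apply/andP; split; lra.
    have -> : sup S + (t - sup S) = t by ring.
    by apply/andP; split; lra.
  by rewrite e1 -e2; apply: ht2; rewrite ht0 lexx.
case: (ltP t2 (sup S + e)) => h2; first exact: key.
exfalso.
have Su : S (sup S + e / 2).
  split; first by apply/andP; split; lra.
  move=> u /andP[a b]; apply: key => //; lra.
have := sup_upper_bound hs Su; lra.
Qed.

Lemma LCP (P : R -> Prop) :
  (forall t, exists2 e, 0 < e & forall d, `|d| < e -> (P (t + d) <-> P t)) ->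
  forall t1 t2, P t1 -> P t2.
Proof.
move=> hloc t1 t2 h1.
pose g := fun t => if pselect (P t) then (1 : R) else 0.
have hlc : forall t, - `|t1| - `|t2| - 1 < t < `|t1| + `|t2| + 1 -> exists2 e, 0 < e &
     forall d, `|d| < e -> - `|t1| - `|t2| - 1 < t + d < `|t1| + `|t2| + 1 -> g (t + d) = g t.
  move=> t _; have [e e0 he] := hloc t; exists e => // d hd _.
  rewrite /g; destruct (pselect (P (t + d))) as [a|a]; destruct (pselect (P t)) as [b|b] => //.
  + by case: b; apply/(he d hd).
  + by case: a; apply/(he d hd).
have hr : forall t, `|t| <= `|t1| + `|t2| -> - `|t1| - `|t2| - 1 < t < `|t1| + `|t2| + 1.
  move=> t; rewrite ler_norml => /andP[a b]; apply/andP; split; lra.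
have b1 := hr t1 (ltac:(by rewrite lerDl normr_ge0)).
have b2 := hr t2 (ltac:(by rewrite lerDr normr_ge0)).
have := LC hlc b1 b2; rewrite /g.
destruct (pselect (P t1)) as [p1|n1]; last by case: n1.
destruct (pselect (P t2)) as [p2|n2]; first by [].
by move/eqP; rewrite oner_eq0.
Qed.


Definition phi j (ab : R * R) : X lam := bp j ab.1 (s j + ab.2).

Lemma phi_band j (b : R) : 0 < b < s j.+1 - s j -> s j < s j + b < s j.+1.
Proof. move=> /andP[a1 a2]; apply/andP; split; lra. Qed.

Lemma chart j : horiz_cyl_chart lam (W j) (s j.+1 - s j) (phi j).
Proof.
have h0 : 0 < s j.+1 - s j by rewrite subr_gt0 s_lt_S.
split => //; first exact: W_gt0.
- move=> a b a' b' hb hb'; split.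
  + move=> e; have := f_equal sval e; rewrite /phi /= !bpE ?phi_band // => [[e1 e2]].
    have eb : b = b' by move: e2 => /addrI.
    split => //.
    have [z1 hz1] := red_eq j a; have [z2 hz2] := red_eq j a'.
    exists (z1 - z2); rewrite intrD intrN mulrDl mulNr.
    move: e1; rewrite hz1 hz2 => e1; lra.
  + by case=> <- [z ->]; rewrite /phi /= bp_per.
- move=> a b hb; have hy := phi_band hb.
  exists (Num.min (Num.min b (s j.+1 - s j - b)) (rho j a)).
    by move: hb => /andP[u1 u2]; rewrite !lt_min u1 subr_gt0 u2 rho_gt0.
  move=> v hv.
  have e0 : 0 < Num.min (Num.min b (s j.+1 - s j - b)) (rho j a).
    by move: hb => /andP[u1 u2]; rewrite !lt_min u1 subr_gt0 u2 rho_gt0.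
  have [hv1 hv2] := ball_abs e0 hv.
  have hv2' : `|v.2| < Num.min (s j + b - s j) (s j.+1 - (s j + b)).
    have -> : s j + b - s j = b by ring.
    have -> : s j.+1 - (s j + b) = s j.+1 - s j - b by ring.
    by apply: lt_le_trans hv2 _; rewrite ge_min lexx.
  have hv1' : `|v.1| < rho j a by apply: lt_le_trans hv1 _; rewrite ge_min lexx orbT.
  have := @band_dev j a (s j + b) v hy hv2' hv1'.
  by rewrite /phi /= addrA.
Qed.

Lemma band_same j : same_set lam (band lam j) (cyl_set lam (s j.+1 - s j) (phi j)).
Proof.
move=> x; split.
- move=> hb; exists (sval x).1, ((sval x).2 - s j); split.
    by move: hb => /andP[a b]; apply/andP; split; lra.
  rewrite /phi /=; have -> : s j + ((sval x).2 - s j) = (sval x).2 by ring.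
  exact: bp_X.
- move=> [a [b [hb ->]]]; rewrite /band /phi /= bpE /=; exact: phi_band.
Qed.

Lemma band_cyl j : is_horiz_cyl lam (band lam j).
Proof. by exists (W j), (s j.+1 - s j), (phi j); split; [exact: chart | exact: band_same]. Qed.

Lemma twist c j (m : nat) w h : h = s j.+1 - s j -> m%:R * w = c * h ->
  twist_power lam (shear c) m w h (phi j).
Proof.
move=> eh ew a b hb; subst h; rewrite /phi /= shear_bp; last exact: phi_band.
have h0 : s j.+1 - s j != 0 by rewrite subr_eq0 eq_sym; apply/negP => /eqP /s_inj; lia.
congr bp; rewrite /= ew.
have -> : s j + b - s j = b by ring.
by field.
Qed.


Definition sidx (x : R) := idx (fun i => (s i <= x) && (x < s i.+1)).
Lemma sidxE i x : s i <= x < s i.+1 -> sidx x = i.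
Proof.
move=> h; have := @idxP (fun i => (s i <= x) && (x < s i.+1)) (ex_intro _ i h).
rewrite -/(sidx x) => /andP[a b]; move: h => /andP[c d].
have := ix_le_lt a d; have := ix_le_lt c b; lia.
Qed.

Definition Dfun (q : R * R) : R :=
  match pselect (in_region lam q) with
  | left _ => s (sidx q.2).+1 - q.1
  | right _ => s (sidx q.1).+1 - q.1 end.

Lemma Dfun_reg q i : in_region lam q -> q.2 = s i -> Dfun q = s i.+1 - q.1.
Proof.
move=> h e; rewrite /Dfun; case: (pselect _) => // _.
by rewrite e (@sidxE i) // lexx s_lt_S.
Qed.

Lemma Dfun_LH q m : onLH lam m q -> Dfun q = s m.+1 - q.1.
Proof.
move=> h; rewrite /Dfun; case: (pselect _) => [hr|_].
  by case: q h hr => x y h hr; case: (reg_notLH hr h).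
by case: h => /andP[a b] _; rewrite (@sidxE m) // (ltW a) b.
Qed.

Lemma Rep_reg z r : Rep lam z r -> in_region lam r -> sval z = r.
Proof. by case=> [//|/glue_onU h] hr; case: (reg_notU hr h). Qed.
Lemma Rep_L z r : Rep lam z r -> onL lam r -> sval z = r.
Proof. by case=> [//|/glue_onU h] hr; case: (L_notU hr h). Qed.

Lemma B_horiz x : isB (sval x) -> 0 < Dfun (sval x) /\
  exists2 mu, 0 < mu & forall p t z, Rep lam x p -> `|t| < mu ->
    Rep lam z (addv p (t, 0)) -> Dfun (sval z) = Dfun (sval x) - t.
Proof.
case: x => [[x1 y] hX] /= hB.
have hX' := hX; case: hX' => [H|[[m hm]|[n hn]]].
- have H' := H; move/RC: H' => [[j [hb _]]|[i [i0 ey /andP[hx1 hx2]]]].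
    by case: (band_notB hb hB).
  rewrite /= in ey hx1 hx2; subst y.
  rewrite (@Dfun_reg _ i H (erefl _)) /=; split; first by rewrite subr_gt0.
  exists (Num.min (x1 - s i.-1) (s i.+1 - x1)); first by rewrite lt_min !subr_gt0 hx1 hx2.
  move=> p t z hR ht hz.
  move: ht; rewrite lt_min !ltr_norml => /andP[/andP[a1 a2] /andP[b1 b2]].
  have ep : p = (x1, s i).
    case: hR => // g; exfalso; case/glue_cases: g => [[m [hm _]]|[n [hn _]]].
    + exact: (@reg_notLH m x1 (s i)).
    + exact: (@reg_notLV n x1 (s i)).
  subst p.
  have hr : in_region lam (addv (x1, s i) (t, 0)).
    rewrite RC; right; exists i; rewrite /addv /= addr0; split => //.
    by apply/andP; split; lra.
  rewrite (Rep_reg hz hr) (@Dfun_reg _ i hr) /addv /= ?addr0 //; ring.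
- case: hm => /andP[hx1 hx2] ey; rewrite /= in hx1 hx2 ey; subst y.
  have hLH : onLH lam m (x1, s m.-1) by split; [rewrite /= hx1 hx2 | by []].
  rewrite (Dfun_LH hLH) /=; split; first by rewrite subr_gt0.
  exists (Num.min (x1 - s m) (s m.+1 - x1)); first by rewrite lt_min !subr_gt0 hx1 hx2.
  move=> p t z hR ht hz.
  move: ht; rewrite lt_min !ltr_norml => /andP[/andP[a1 a2] /andP[b1 b2]].
  have hLH' : onLH lam m (x1 + t, s m.-1).
    by split => //; rewrite /=; apply/andP; split; lra.
  case: hR => [ep|g].
  + subst p; have e : addv (x1, s m.-1) (t, 0) = (x1 + t, s m.-1) by rewrite /addv /= addr0.
    rewrite e in hz; rewrite (Rep_L hz (or_introl (ex_intro _ m hLH'))) (Dfun_LH hLH') /=; ring.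
  + have ep := glue_LH g hLH; subst p.
    have e : addv (x1, s m.-1) (t, 0) = (x1 + t, s m.-1) by rewrite /addv /= addr0.
    have hU : onUH lam m.+1 (addv (x1, s m.+2) (t, 0)).
      split => //; split; first by rewrite /addv /= addr0.
      by rewrite /addv /=; apply/andP; split; lra.
    case: hz => [ez|gz].
    * exfalso; apply: (@X_notU (addv (x1, s m.+2) (t, 0))); first by rewrite ez; exact: svalP.
      by left; exists m.+1.
    * have [ez _] := glue_UH gz hU.
      rewrite ez /= (Dfun_LH hLH') /=; ring.
- case: hn => n0 [_ /andP[a b]]; case: hB => i ei; rewrite /= in a b ei; subst y.
  exfalso; sfin.
Qed.

Lemma Rep_isB z r : Rep lam z r -> (isB r <-> isB (sval z)).
Proof. by move=> h; split; [exact: Rep_B_rev h | exact: Rep_B h]. Qed.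

Lemma ball_d (e d : R) : `|d| < e -> ball0 e (d, 0).
Proof.
move=> h; rewrite /ball0 /= expr0n addr0 /=.
have h0 : 0 <= `|d| := normr_ge0 d.
rewrite -real_normK ?num_real // !expr2; nra.
Qed.
Lemma ball_d2 (e d : R) : `|d| < e -> ball0 e (0, d).
Proof.
move=> h; rewrite /ball0 /= expr0n add0r /=.
have h0 : 0 <= `|d| := normr_ge0 d.
rewrite -real_normK ?num_real // !expr2; nra.
Qed.

Lemma cyl_notB w h (ph : R * R -> X lam) a b : horiz_cyl_chart lam w h ph -> 0 < b < h ->
  ~ isB (sval (ph (a, b))).
Proof.
move=> [w0 h0 hinj hdev] hb hB.
have hall : forall t, isB (sval (ph (a + t, b))).
  move=> t; apply: (@LCP (fun t => isB (sval (ph (a + t, b)))) _ 0); last by rewrite addr0.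
  move=> t'; have [e e0 he] := hdev (a + t') b hb; exists e => // d hd.
  have [p [hR1 hR2 _]] := he (d, 0) (ball_d hd).
  rewrite /= addr0 -addrA in hR2.
  rewrite -(Rep_isB hR2) -(Rep_isB hR1).
  by split; case=> i ei; exists i; move: ei; rewrite /addv /= addr0.
set T := Dfun (sval (ph (a, b))).
have T0 : 0 < T by case: (B_horiz hB).
pose g t := Dfun (sval (ph (a + t, b))) + t.
have hloc : forall t, -1 < t < T + 1 -> exists2 e, 0 < e &
    forall d, `|d| < e -> -1 < t + d < T + 1 -> g (t + d) = g t.
  move=> t _; have [_ [mu mu0 hmu]] := B_horiz (hall t).
  have [e e0 he] := hdev (a + t) b hb.
  exists (Num.min e mu); first by rewrite lt_min e0 mu0.
  move=> d; rewrite lt_min => /andP[d1 d2] _.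
  have [p [hR1 hR2 _]] := he (d, 0) (ball_d d1).
  rewrite /= addr0 -addrA in hR2.
  rewrite /g (hmu p d _ hR1 d2 hR2); ring.
have := LC hloc (ltac:(apply/andP; split; lra) : -1 < 0 < T + 1) (ltac:(apply/andP; split; lra) : -1 < T < T + 1).
rewrite /g !addr0 -/T => e.
have [h1 _] := B_horiz (hall T).
lra.
Qed.

Lemma cyl_shift w h (ph : R * R -> X lam) a b : horiz_cyl_chart lam w h ph -> 0 < b < h ->
  exists2 e, 0 < e & forall v, ball0 e v -> 0 < b + v.2 < h ->
    (sval (ph (a + v.1, b + v.2))).2 = (sval (ph (a, b))).2 + v.2.
Proof.
move=> hc hb; have hc' := hc; case: hc' => [w0 h0 hinj hdev].
have [e e0 he] := hdev a b hb; exists e => // v hv hb'.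
have [p [hR1 hR2 _]] := he v hv.
have e1 := Rep_nB hR1 (cyl_notB (a:=a) hc hb).
have e2 := Rep_nB hR2 (cyl_notB (a:=a + v.1) hc hb').
by rewrite -e2 -e1.
Qed.

Lemma cyl_band w h (ph : R * R -> X lam) : horiz_cyl_chart lam w h ph ->
  exists n, forall a b, 0 < b < h -> inband n (sval (ph (a, b))).
Proof.
move=> hc; have hc' := hc; case: hc' => [w0 h0 hinj hdev].
pose Y a b := (sval (ph (a, b))).2.
have hhor : forall a b, 0 < b < h -> Y a b = Y 0 b.
  move=> a b hb.
  have hloc : forall t, - `|a| - 1 < t < `|a| + 1 -> exists2 e, 0 < e &
      forall d, `|d| < e -> - `|a| - 1 < t + d < `|a| + 1 -> Y (t + d) b = Y t b.
    move=> t _; have [e e0 he] := cyl_shift t hc hb; exists e => // d hd _.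
    have := he (d, 0) (ball_d hd); rewrite /= !addr0; apply; exact: hb.
  have ha : - `|a| <= a <= `|a| by rewrite -ler_norml.
  have ha0 := normr_ge0 a.
  move: ha => /andP[u1 u2].
  have i1 : - `|a| - 1 < a < `|a| + 1 by apply/andP; split; lra.
  have i2 : - `|a| - 1 < 0 < `|a| + 1 by apply/andP; split; lra.
  exact: (@LC _ _ (fun t => Y t b) hloc a 0 i1 i2).
have hver : forall b, 0 < b < h -> Y 0 b - b = Y 0 (h / 2) - h / 2.
  move=> b hb.
  have hloc : forall t, 0 < t < h -> exists2 e, 0 < e &
      forall d, `|d| < e -> 0 < t + d < h -> Y 0 (t + d) - (t + d) = Y 0 t - t.
    move=> t ht; have [e e0 he] := cyl_shift 0 hc ht; exists e => // d hd htd.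
    have := he (0, d) (ball_d2 hd); rewrite /Y /= !addr0 => ->; first ring.
    exact: htd.
  exact: (@LC _ _ (fun t => Y 0 t - t) hloc b (h / 2) hb ltac:(apply/andP; split; lra)).
have hh2 : 0 < h / 2 < h by apply/andP; split; lra.
set K := Y 0 (h / 2) - h / 2.
have hY : forall a b, 0 < b < h -> Y a b = b + K.
  move=> a b hb; rewrite hhor //; have := hver b hb; rewrite -/K; lra.
case: (X_cases (svalP (ph (0, h / 2)))) => [[n hn]|hB]; last by case: (cyl_notB (a:=0) hc hh2).
exists n => a b hb.
have hn' : s n < h / 2 + K < s n.+1 by rewrite -(hY 0 _ hh2).
move: hn' => /andP[n1 n2].
rewrite /inband -/(Y a b) (hY a b hb); apply/andP; split.
- rewrite ltNge; apply/negP => hle.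
  have hb' : 0 < s n - K < h by move: hb => /andP[u1 u2]; apply/andP; split; lra.
  apply: (cyl_notB (a:=0) hc hb'); exists n; rewrite -/(Y 0 _) (hY 0 _ hb'); ring.
- rewrite ltNge; apply/negP => hle.
  have hb' : 0 < s n.+1 - K < h by move: hb => /andP[u1 u2]; apply/andP; split; lra.
  apply: (cyl_notB (a:=0) hc hb'); exists n.+1; rewrite -/(Y 0 _) (hY 0 _ hb'); ring.
Qed.


Lemma mid_band j : s j < (s j + s j.+1) / 2 < s j.+1.
Proof. have := s_lt_S j; move=> h; apply/andP; split; lra. Qed.

Lemma max_band j : is_max_horiz_cyl lam (band lam j).
Proof.
split; first exact: band_cyl.
move=> D [w [h [ph [hc hs]]]] hsub x; split; first exact: hsub.
have [n hn] := cyl_band hc.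
pose x0 := bp j 0 ((s j + s j.+1) / 2).
have hx0 : band lam j x0 by rewrite /band bpE ?mid_band //=; exact: mid_band.
have [a [b [hb ex0]]] := (hs x0).1 (hsub _ hx0).
have ejn : n = j by apply: (band_uniq (hn a b hb)); rewrite -ex0.
move=> /hs [a' [b' [hb' ->]]]; rewrite -ejn; exact: hn.
Qed.

Lemma max_is_band C : is_max_horiz_cyl lam C -> exists n, same_set lam C (band lam n).
Proof.
move=> [[w [h [ph [hc hs]]]] hmax].
have [n hn] := cyl_band hc; exists n.
apply: hmax (band_cyl n) _ => x /hs [a [b [hb ->]]]; exact: hn.
Qed.

Lemma closure x : exists j, in_closure lam (band lam j) x.
Proof.
case: (X_cases (svalP x)) => [[j hb]|hB].
  exists j => e e0; exists (0, 0), x; split => //.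
  - by rewrite /ball0 /= expr0n add0r exprn_gt0.
  - exists (sval x); split; first by left.
    + by left; case: (sval x) => a b; rewrite /addv /= !addr0.
    + move=> t _; have -> : addv (sval x) (scalev t (0, 0)) = sval x.
        by case: (sval x) => a b; rewrite /addv /scalev /= mulr0 !addr0.
      apply: (@Rep_inPoly x); by left.
have [j [ej hj]] : exists j, (sval x).2 = s j /\ s j.-1 <= (sval x).1 <= s j.+2.
  case: x hB => [[x1 y] hX] /= hB.
  case: hX => [H|[[m [/andP[a b] e]]|[n hn]]].
  - move/RC: H => [[j [hb _]]|[i [i0 ey /andP[hx1 hx2]]]].
      by case: (band_notB hb hB).
    exists i; split => //; rewrite /= ltW //=; apply: ltW (lt_le_trans hx2 _).
    by rewrite s_leE.
  - exists m.-1; split => //=; apply/andP; split.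
      by apply: ltW (le_lt_trans _ a); rewrite s_leE; lia.
    by apply: ltW (lt_le_trans b _); rewrite s_leE; lia.
  - case: hn => n0 [_ /andP[a b]]; case: hB => i ei; rewrite /= in a b ei; subst y.
    exfalso; sfin.
exists j => e e0.
have hH := s_lt_S j.
set d := Num.min e (s j.+1 - s j) / 2.
have d0 : 0 < d by rewrite divr_gt0 // lt_min e0 subr_gt0.
have de : d < e.
  rewrite /d ltr_pdivrMr //; have : Num.min e (s j.+1 - s j) <= e by rewrite ge_min lexx.
  lra.
have dh : d < s j.+1 - s j.
  rewrite /d ltr_pdivrMr //; have : Num.min e (s j.+1 - s j) <= s j.+1 - s j by rewrite ge_min lexx orbT.
  have : 0 < s j.+1 - s j by rewrite subr_gt0.
  lra.
have hR : Rep lam x (sval x) by left.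
have hb : inband j (addv (sval x) (0, d)) by rewrite /inband /addv /= ej; apply/andP; split; lra.
have hp2 : s j <= (sval x).2 <= s j.+1 by rewrite ej lexx ltW.
have hp1 : s j.-1 <= (sval x).1 + (0, d).1 <= s j.+2 by rewrite /= addr0.
have hD := Dev_mk hR (SEG (Rep_inPoly hR) hp2 hj hb hp1) hb.
exists ((0 : R), d); exists (bp j ((sval x).1 + 0) ((sval x).2 + d)); split.
- by apply: ball_d2; rewrite gtr0_norm.
- exact: hD.
- by rewrite /band bpE /=; exact: hb.
Qed.

Lemma decomp : horiz_cyl_decomposition lam (is_max_horiz_cyl lam).
Proof.
split => //.
- move=> C D hC hD [x [hCx hDx]].
  have [n hn] := max_is_band hC; have [n' hn'] := max_is_band hD.
  have e : n = n' by apply: (band_uniq ((hn x).1 hCx) ((hn' x).1 hDx)).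
  subst n'; move=> y; rewrite hn hn' //.
- move=> x; have [j hj] := closure x; exists (band lam j); split => //; exact: max_band.
Qed.

Lemma det_parabolic (c : R) : \det (parabolic c) = 1.
Proof.
rewrite -det_tr det_trig.
  by rewrite big_ord_recr big_ord1 /= !mxE /= mul1r.
by apply/is_trig_mxP => i j; rewrite !mxE; case: i => [[|[|i]] hi] //; case: j => [[|[|j]] hj].
Qed.

End S1.

Theorem mainTheorem6 (R : realType) (k l : nat) (lam : R) :
  (0 < l)%N -> (l < k)%N -> coprime k l ->
  0 < lam -> k%:R * (lam + 1) = l%:R * (lam^-1 + 1 + lam) ->
  horiz_cyl_decomposition lam (is_max_horiz_cyl lam) /\
  in_Veech lam (parabolic (k%:R * (1 + lam))) /\
  exists f : X lam -> X lam,
    [/\ affine_homeo lam f (parabolic (k%:R * (1 + lam))),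
        (* bottom horizontal cylinder: height 1, circumference 1 + lam *)
        is_max_horiz_cyl lam (band lam 0) /\
        (exists phi, [/\ horiz_cyl_chart lam (1 + lam) 1 phi,
                         same_set lam (band lam 0) (cyl_set lam 1 phi) &
                         twist_power lam f k (1 + lam) 1 phi]),
        (* every other horizontal cylinder: height lam^n,
           circumference lam^(n-1) + lam^n + lam^(n+1), n >= 1 *)
        (forall n : nat, (0 < n)%N ->
           is_max_horiz_cyl lam (band lam n) /\
           exists phi,
             [/\ horiz_cyl_chart lam (lam ^+ n.-1 + lam ^+ n + lam ^+ n.+1) (lam ^+ n) phi,
                 same_set lam (band lam n) (cyl_set lam (lam ^+ n) phi) &
                 twist_power lam f l (lam ^+ n.-1 + lam ^+ n + lam ^+ n.+1) (lam ^+ n) phi]) &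
        (* these bands are all the maximal horizontal cylinders *)
        (forall C, is_max_horiz_cyl lam C -> exists n : nat, same_set lam C (band lam n))].
Proof.
move=> l0 lk _ lam0 H.
have lam0' : lam != 0 by rewrite gt_eqF.
have hS : forall j, ss lam j.+1 - ss lam j = lam ^+ j.
  move=> j; rewrite sS.
  ring.
have W0 : W lam 0 = 1 + lam.
  rewrite /W /= !sS expr0 expr1.
  ring.
have WS : forall i, W lam i.+1 = lam ^+ i + lam ^+ i.+1 + lam ^+ i.+2.
  move=> i; rewrite /W /= !sS.
  ring.
have hkey : forall i, k%:R * (1 + lam) * lam ^+ i.+1 = l%:R * (lam ^+ i + lam ^+ i.+1 + lam ^+ i.+2).
  move=> i; rewrite (addrC 1 lam) H !exprS.
  by field.
pose c := k%:R * (1 + lam).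
have hc : forall j, exists z : int, c * (ss lam j.+1 - ss lam j) = z%:~R * W lam j.
  case=> [|i0]; rewrite hS.
    by exists k; rewrite W0 expr0 mulr1 /c.
  by exists l; rewrite WS /c hkey.
have hLA := LA lam0 hc.
have hbij : bijective (shear lam0 c).
  exists (shear lam0 (- c)); first exact: shearK.
  by move=> x; have := shearK lam0 (- c) x; rewrite opprK.
have haff : affine_homeo lam (shear lam0 c) (parabolic c) by split.
split; first exact: decomp.
split.
  exists (shear lam0 c), (parabolic c); split => //; last by left.
  by rewrite det_parabolic ltr01.
exists (shear lam0 c); split => //.
- split; first exact: max_band.
  exists (phi lam0 0); split.
  + have := chart lam0 0; rewrite W0 hS expr0 //.
  + have := band_same lam0 0; rewrite hS expr0 //.
  + apply: twist; first by rewrite hS expr0.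
    by rewrite /c mulr1.
- move=> [//|i] _; split; first exact: max_band.
  exists (phi lam0 i.+1); split.
  + by have := chart lam0 i.+1; rewrite WS hS.
  + by have := band_same lam0 i.+1; rewrite hS.
  + apply: twist; first by rewrite hS.
    by rewrite /= hkey mulrC.
- exact: max_is_band.
Qed.
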